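(* Let $\Gamma=\langle V,(w_u)_{u\in V},\alpha,1\rangle$ be a celebrity game with critical distance $\beta=1$, and let $G=(V,E)$ be the outcome graph of a strategy profile of minimum social cost. Then for any distinct $u,v\in V$: if $w_u+w_v<\alpha$ then $\{u,v\}\notin E$, and if $w_u+w_v>\alpha$ then $\{u,v\}\in E$.
   Context: A celebrity game $\Gamma=\langle V,(w_u)_{u\in V},\alpha,\beta\rangle$ consists of a set of players $V=\{1,\dots,n\}$, celebrity weights $w_u>0$, a link cost $\alpha>0$ and a critical distance $\beta$ with $1\le\beta\le n-1$. A strategy of player $u$ is a set $S_u\subseteq V\setminus\{u\}$; a strategy profile is $S=(S_1,\dots,S_n)$; its outcome graph $G[S]$ is the undirected graph on $V$ with edge set $\{\{u,v\}: u\in S_v\text{ or }v\in S_u\}$. With $d_G$ the graph distance (infinite between different connected components), the cost of player $u$ is $c_u(S)=\alpha|S_u|+\sum_{v:\,d_{G[S]}(u,v)>\beta}w_v$ and the social cost is $C(S)=\sum_{u\in V}c_u(S)$. *)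

(* Defs.v *)
From mathcomp Require Import all_boot all_order all_algebra.
Set Implicit Arguments. Unset Strict Implicit. Unset Printing Implicit Defensive.
Import Order.TTheory GRing.Theory Num.Theory.
Local Open Scope ring_scope.

(* Players are V = 'I_n.  A strategy profile assigns to each player u a set
   S u of players (u itself excluded, see [valid_profile]). *)
Definition profile (n : nat) := 'I_n -> {set 'I_n}.

Definition valid_profile n (S : profile n) : Prop := forall u, u \notin S u.

Definition edge n (S : profile n) (u v : 'I_n) : bool := (u \in S v) || (v \in S u).

Fixpoint ball n (S : profile n) (k : nat) (u : 'I_n) : {set 'I_n} :=
  match k with
  | 0 => [set u]
  | k'.+1 => ball S k' u :|: [set v | [exists x in ball S k' u, edge S x v]]
  end.

Definition dist_le n (S : profile n) (u v : 'I_n) (k : nat) : bool := v \in ball S k u.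

Definition player_cost (R : realFieldType) n (w : 'I_n -> R) (alpha : R) (beta : nat)
  (S : profile n) (u : 'I_n) : R :=
  alpha * #|S u|%:R + \sum_(v | ~~ dist_le S u v beta) w v.

Definition social_cost (R : realFieldType) n (w : 'I_n -> R) (alpha : R) (beta : nat)
  (S : profile n) : R :=
  \sum_(u : 'I_n) player_cost w alpha beta S u.

Definition socially_optimal (R : realFieldType) n (w : 'I_n -> R) (alpha : R) (beta : nat)
  (S : profile n) : Prop :=
  valid_profile S /\
  forall S' : profile n, valid_profile S' -> social_cost w alpha beta S <= social_cost w alpha beta S'.

(* Main.v *)
Require Import Defs.
From mathcomp Require Import all_boot all_order all_algebra.
From mathcomp Require Import ring lra.
Import Order.TTheory GRing.Theory Num.Theory.
Local Open Scope ring_scope.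

Lemma dist1 n (S : profile n) a b : dist_le S a b 1 = (b == a) || edge S a b.
Proof.
rewrite /dist_le /= !inE; congr (_ || _).
apply/existsP/idP => [[x /andP[/set1P -> //]] | h].
by exists a; rewrite inE eqxx.
Qed.

Lemma sum_pred_change (R : realFieldType) n (w : 'I_n -> R) (P Q : pred 'I_n) c :
  (forall b, b != c -> P b = Q b) ->
  \sum_(b | Q b) w b = \sum_(b | P b) w b + ((Q c)%:R - (P c)%:R) * w c.
Proof.
move=> H; rewrite (big_mkcond Q) (big_mkcond P).
rewrite [LHS](bigD1 c) // [in RHS](bigD1 c) //=.
rewrite [in LHS](eq_bigr (fun b => if P b then w b else 0)); last by move=> b /H ->.
by case: (P c); case: (Q c); rewrite /=; ring.
Qed.

Lemma sum_two (R : realFieldType) n (f g : 'I_n -> R) u v : u != v ->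
  (forall a, a != u -> a != v -> g a = f a) ->
  \sum_a g a = \sum_a f a + (g u - f u) + (g v - f v).
Proof.
move=> uv H.
have: \sum_a (g a - f a) = (g u - f u) + (g v - f v).
  rewrite (bigD1 u) //= (bigD1 v) /=; last by rewrite eq_sym uv.
  rewrite big1 ?addr0 // => a /andP[au av]; by rewrite H // subrr.
rewrite sumrB => h; lra.
Qed.

Lemma pc_change (R : realFieldType) n (w : 'I_n -> R) alpha (S S' : profile n) a c :
  (forall b, b != c -> edge S' a b = edge S a b) ->
  player_cost w alpha 1 S' a = alpha * #|S' a|%:R + \sum_(b | ~~ dist_le S a b 1) w b
    + ((~~ dist_le S' a c 1)%:R - (~~ dist_le S a c 1)%:R) * w c.
Proof.
move=> H; rewrite /player_cost.
rewrite (@sum_pred_change _ _ w (fun b => ~~ dist_le S a b 1) (fun b => ~~ dist_le S' a b 1) c) ?addrA //.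
by move=> b /H; rewrite !dist1 => ->.
Qed.

Lemma pc_same (R : realFieldType) n (w : 'I_n -> R) alpha (S S' : profile n) a :
  S' a = S a -> (forall b, edge S' a b = edge S a b) ->
  player_cost w alpha 1 S' a = player_cost w alpha 1 S a.
Proof.
move=> HS H; rewrite /player_cost HS; congr (_ + _).
by apply: eq_bigl => b; rewrite !dist1 H.
Qed.

Theorem proposition12 (R : realFieldType) (n : nat) (w : 'I_n -> R) (alpha : R)
  (S : profile n) :
  (forall u, 0 < w u) -> 0 < alpha -> (1 <= n.-1)%N ->
  socially_optimal w alpha 1 S ->
  forall u v : 'I_n, u != v ->
    (w u + w v < alpha -> ~~ edge S u v) /\
    (alpha < w u + w v -> edge S u v).
Proof.
move=> wpos apos _ [valid opt] u v uv.
have vu : v != u by rewrite eq_sym.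
split.
- move=> lt; apply/negP => e.
  pose S' : profile n := fun a => if a == u then S u :\ v else if a == v then S v :\ u else S a.
  have val' : valid_profile S'.
    move=> a; rewrite /S'; case: eqP => [->|_]; first by rewrite in_setD1 (negbTE (valid u)) andbF.
    case: eqP => [->|_]; [by rewrite in_setD1 (negbTE (valid v)) andbF | exact: valid].
  have := opt S' val'.
  rewrite /social_cost (@sum_two _ _ (player_cost w alpha 1 S) (player_cost w alpha 1 S') u v uv).
  2: { move=> a au av; apply: pc_same; first by rewrite /S' (negbTE au) (negbTE av).
       move=> b; rewrite /edge /S' (negbTE au) (negbTE av).
       case: eqP => [->|_]; first by rewrite in_setD1 av.
       case: eqP => [->|_] //; by rewrite in_setD1 au. }
  rewrite (@pc_change _ _ w alpha S S' u v); last first.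
    move=> b bv; rewrite /edge /S' eqxx in_setD1 bv /=.
    case: eqP => [->|_]; first by rewrite in_setD1 uv.
    by case: eqP => [bv'|] //; move: bv; rewrite bv' eqxx.
  rewrite (@pc_change _ _ w alpha S S' v u); last first.
    move=> b bu; rewrite /edge /S' eqxx (negbTE vu) in_setD1 bu /=.
    case: eqP => [bu'|_]; first by move: bu; rewrite bu' eqxx.
    by case: eqP => [->|_] //; rewrite in_setD1 vu.
  rewrite !dist1 /S' eqxx (negbTE vu) /edge !eqxx ?(negbTE vu) ?(negbTE uv).
  rewrite !in_setD1 !eqxx /=.
  rewrite /player_cost.
  move: e; rewrite /edge [#|S u|](cardsD1 v) [#|S v|](cardsD1 u).
  case: (u \in S v); case: (v \in S u) => //= _; rewrite ?natrD /=; lra.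
- move=> gt; apply/negPn/negP => ne.
  pose S' : profile n := fun a => if a == u then v |: S u else S a.
  have val' : valid_profile S'.
    move=> a; rewrite /S'; case: eqP => [->|_]; last exact: valid.
    by rewrite in_setU1 negb_or uv valid.
  have nvu : v \notin S u by apply: contra ne => h; rewrite /edge h orbT.
  have := opt S' val'.
  rewrite /social_cost (@sum_two _ _ (player_cost w alpha 1 S) (player_cost w alpha 1 S') u v uv).
  2: { move=> a au av; apply: pc_same; first by rewrite /S' (negbTE au).
       move=> b; rewrite /edge /S' (negbTE au).
       case: eqP => [->|_] //; by rewrite in_setU1 (negbTE av). }
  rewrite (@pc_change _ _ w alpha S S' u v); last first.
    move=> b bv; rewrite /edge /S' eqxx in_setU1 (negbTE bv) /=.
    case: eqP => [->|_] //; by rewrite in_setU1 (negbTE uv).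
  rewrite (@pc_change _ _ w alpha S S' v u); last first.
    move=> b bu; rewrite /edge /S' (negbTE vu).
    by case: eqP => [bu'|_] //; move: bu; rewrite bu' eqxx.
  have nuv : u \notin S v by apply: contra ne => h; rewrite /edge h.
  rewrite !dist1 /S' eqxx ?(negbTE vu) /edge !eqxx ?(negbTE vu) ?(negbTE uv).
  rewrite !in_setU1 !eqxx ?(negbTE nuv) ?(negbTE nvu) ?(negbTE uv) /=.
  rewrite /player_cost cardsU1 nvu natrD /=; lra.
Qed.
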